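(* Let $\lambda\in(\frac16,\frac56)$. For every $x\in[0,1]\setminus\mathcal E$, $$h_{F^\lambda}(x)\le1-\max\Big(\limsup_{n\to\infty}\frac{\beta_1(x,n)\log(6\lambda+1)+\beta_2(x,n)\log(6\lambda-1)}{\beta_{0,3}(x,n)\log3+\beta_{1,2}(x,n)\log6},\,0\Big),$$ with equality if $x\in\mathcal I$.
   Context: Construction: $F^\lambda_0\equiv0$ on $[0,1]$. Given $F^\lambda_n$ with its $4^n$ closed intervals of generation $n$ (covering $[0,1]$, disjoint interiors, $F^\lambda_n$ affine on each), on each interval $[a,b]$ of generation $n$, with $\ell=b-a$ and slope $m$, $F^\lambda_{n+1}$ coincides with $F^\lambda_n$ at $a,a+\ell/3,a+2\ell/3,b$, equals $F^\lambda_n(a+\ell/2)+\lambda\ell\sqrt{1+m^2}$ at $a+\ell/2$, and is affine on $[a,a+\ell/3],[a+\ell/3,a+\ell/2],[a+\ell/2,a+2\ell/3],[a+2\ell/3,b]$. $F^\lambda=\lim_nF^\lambda_n$. Pointwise exponent: $f\in\mathcal C^\alpha(x_0)$ if there exist a polynomial $P$ of degree at most $\lfloor\alpha\rfloor$ and $C,\delta>0$ with $|f(x)-P(x-x_0)|\le C|x-x_0|^\alpha$ whenever $|x-x_0|<\delta$; $h_f(x_0)=\sup\{\alpha\ge0:f\in\mathcal C^\alpha(x_0)\}$. Dynamics: $T(x)=3x$ on $[0,\frac13)$, $6x-2$ on $[\frac13,\frac12)$, $4-6x$ on $[\frac12,\frac23)$, $3x-2$ on $[\frac23,1]$; $U(x)=0,1,2,3$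 on these intervals; $u_n(x)=U(T^nx)$; $\beta_i(x,n)=\#\{k<n:u_k(x)=i\}$, $\beta_{i,j}=\beta_i+\beta_j$. $\mathcal E$ is the set of $x$ whose digit sequence is eventually constantly $0$ or eventually constantly $3$; for $x\notin\mathcal E$, $m_n(x)$ is the slope of $F^\lambda_n$ at $x$. $\mathcal I$ is the set of $x\in[0,1]\setminus\mathcal E$ with $\lim_{n\to\infty}|m_n(x)|=+\infty$. *)

(* Defs.v *)
From Stdlib Require Import Reals List.
From Coquelicot Require Import Coquelicot.
Open Scope R_scope.

(* A generation-n piece: (a, b, F_n a, F_n b); F_n is affine on [a,b]. *)
Definition piece := (R * R * R * R)%type.

Definition refine_piece (lam : R) (p : piece) : list piece :=
  let '(a, b, fa, fb) := p in
  let l := b - a in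
  let m := (fb - fa) / l in
  let x1 := a + l / 3 in
  let x2 := a + l / 2 in
  let x3 := a + 2 * l / 3 in
  let y1 := fa + m * (l / 3) in
  let y2 := fa + m * (l / 2) + lam * l * sqrt (1 + m ^ 2) in
  let y3 := fa + m * (2 * l / 3) in
  (a, x1, fa, y1) :: (x1, x2, y1, y2) :: (x2, x3, y2, y3) :: (x3, b, y3, fb) :: nil.

Fixpoint pieces (lam : R) (n : nat) : list piece :=
  match n with
  | O => (0, 1, 0, 0) :: nil
  | S k => flat_map (refine_piece lam) (pieces lam k)
  end.

(* Evaluation of the piecewise affine function: use the first piece containing x
   (consecutive pieces agree at common endpoints). Outside [0,1] the value is 0. *)
Fixpoint eval_pieces (l : list piece) (x : R) : R :=
  match l with
  | nil => 0
  | (a, b, fa, fb) :: t =>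
      if Rle_dec a x then if Rle_dec x b then fa + (fb - fa) / (b - a) * (x - a)
                          else eval_pieces t x
      else eval_pieces t x
  end.

Fixpoint slope_pieces (l : list piece) (x : R) : R :=
  match l with
  | nil => 0
  | (a, b, fa, fb) :: t =>
      if Rle_dec a x then if Rle_dec x b then (fb - fa) / (b - a)
                          else slope_pieces t x
      else slope_pieces t x
  end.

Definition Fn (lam : R) (n : nat) (x : R) : R := eval_pieces (pieces lam n) x.

Definition F (lam : R) (x : R) : R := real (Lim_seq (fun n => Fn lam n x)).

Definition slope_n (lam : R) (n : nat) (x : R) : R := slope_pieces (pieces lam n) x.

(* |t|^alpha with the convention 0^alpha = 0. *)
Definition rpow (t alpha : R) : R := if Rlt_dec 0 t then Rpower t alpha else 0.

(* Polynomials as coefficient lists [c0; c1; ...]. *)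
Fixpoint peval (P : list R) (t : R) : R :=
  match P with
  | nil => 0
  | c :: Q => c + t * peval Q t
  end.

(* floor alpha = Int_part alpha *)
Definition pointwise_holder (f : R -> R) (x0 alpha : R) : Prop :=
  exists (P : list R) (C delta : R),
    (length P <= S (Z.to_nat (Int_part alpha)))%nat /\ 0 < C /\ 0 < delta /\
    forall x, Rabs (x - x0) < delta ->
      Rabs (f x - peval P (x - x0)) <= C * rpow (Rabs (x - x0)) alpha.

Definition holder_exponent (f : R -> R) (x0 : R) : Rbar :=
  Lub_Rbar (fun alpha => 0 <= alpha /\ pointwise_holder f x0 alpha).

Definition T (x : R) : R :=
  if Rlt_dec x (1/3) then 3 * x
  else if Rlt_dec x (1/2) then 6 * x - 2
  else if Rlt_dec x (2/3) then 4 - 6 * x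
  else 3 * x - 2.

Definition U (x : R) : nat :=
  if Rlt_dec x (1/3) then 0%nat
  else if Rlt_dec x (1/2) then 1%nat
  else if Rlt_dec x (2/3) then 2%nat
  else 3%nat.

Definition digit (x : R) (n : nat) : nat := U (Nat.iter n T x).

Definition beta (i : nat) (x : R) (n : nat) : nat :=
  length (filter (fun k => Nat.eqb (digit x k) i) (seq 0 n)).

Definition inE (x : R) : Prop :=
  (exists N, forall k, (N <= k)%nat -> digit x k = 0%nat) \/
  (exists N, forall k, (N <= k)%nat -> digit x k = 3%nat).

Definition inI (lam x : R) : Prop :=
  0 <= x <= 1 /\ ~ inE x /\
  is_lim_seq (fun n => Rabs (slope_n lam n x)) p_infty.

Definition ratio (lam x : R) (n : nat) : R :=
  (INR (beta 1 x n) * ln (6 * lam + 1) + INR (beta 2 x n) * ln (6 * lam - 1)) /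
  (INR (beta 0 x n + beta 3 x n) * ln 3 + INR (beta 1 x n + beta 2 x n) * ln 6).

Definition Rbar_max0 (y : Rbar) : Rbar :=
  match y with
  | Finite r => Finite (Rmax r 0)
  | p_infty => p_infty
  | m_infty => Finite 0
  end.

Definition holder_bound (lam x : R) : Rbar :=
  Rbar_minus (Finite 1) (Rbar_max0 (LimSup_seq (ratio lam x))).

(* Main.v *)
Require Import Defs.
From Stdlib Require Import Reals Lra Lia List.
From Coquelicot Require Import Coquelicot.
Open Scope R_scope.

Definition ha (p : piece) : R := fst (fst (fst p)).
Definition hb (p : piece) : R := snd (fst (fst p)).
Definition hfa (p : piece) : R := snd (fst p).
Definition hfb (p : piece) : R := snd p.
Definition lenp p := hb p - ha p.
Definition slp p := (hfb p - hfa p) / (hb p - ha p).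
Definition Ap p z := hfa p + slp p * (z - ha p).
Definition inp p z := ha p <= z <= hb p.
Definition Wp p := sqrt (1 + slp p ^ 2).

Lemma ha_t a b fa fb : ha (a,b,fa,fb) = a. Proof. reflexivity. Qed.
Lemma hb_t a b fa fb : hb (a,b,fa,fb) = b. Proof. reflexivity. Qed.
Lemma hfa_t a b fa fb : hfa (a,b,fa,fb) = fa. Proof. reflexivity. Qed.
Lemma hfb_t a b fa fb : hfb (a,b,fa,fb) = fb. Proof. reflexivity. Qed.
Ltac tsimp := repeat (rewrite ?ha_t, ?hb_t, ?hfa_t, ?hfb_t in *); unfold Ap, inp, Wp in *; unfold lenp, slp in *; repeat (rewrite ?ha_t, ?hb_t, ?hfa_t, ?hfb_t in *).

Fixpoint chain (l : list piece) : Prop :=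
  match l with
  | nil => True
  | p :: t => 0 < lenp p /\
     match t with nil => True | q :: _ => hb p = ha q /\ hfb p = hfa q end /\ chain t
  end.

Lemma chain_sorted : forall t p, chain (p :: t) -> forall q, In q t -> hb p <= ha q.
Proof.
  induction t as [|h t IH]; simpl; intros p Hc q Hq; [contradiction|].
  destruct Hc as [_ [[E1 _] Hc]]. destruct Hq as [<-|Hq]; [lra|].
  pose proof (IH h Hc q Hq). destruct Hc as [Hh _]. unfold lenp in Hh. lra.
Qed.

Lemma chain_len : forall l, chain l -> forall q, In q l -> 0 < lenp q.
Proof.
  induction l as [|p t IH]; simpl; intros Hc q Hq; [contradiction|].
  destruct Hc as [H1 [_ H3]]. destruct Hq as [<-|Hq]; auto.
Qed.

Lemma Ap_hb p : 0 < lenp p -> Ap p (hb p) = hfb p.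
Proof. unfold Ap, slp, lenp; intros; field; lra. Qed.
Lemma Ap_ha p : Ap p (ha p) = hfa p.
Proof. unfold Ap; ring. Qed.

Lemma eval_chain : forall l q z, chain l -> In q l -> inp q z -> eval_pieces l z = Ap q z.
Proof.
  induction l as [|p t IH]; intros q z Hc Hq Hz; [contradiction|].
  destruct p as [[[a b] fa] fb]. simpl eval_pieces.
  pose proof (chain_sorted t _ Hc) as Hs. tsimp.
  destruct (Rle_dec a z) as [h1|h1]; [destruct (Rle_dec z b) as [h2|h2]|].
  - destruct Hq as [<-|Hq]; [reflexivity|].
    pose proof (Hs q Hq). unfold inp in Hz.
    destruct t as [|h t']; [contradiction|].
    destruct Hc as [Hl [[E1 E2] Hc]]. tsimp.
    assert (Eh: q = h \/ In q t') by (destruct Hq; auto).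
    destruct Eh as [<-|Hq'].
    + assert (Hzb: z = b) by lra. assert (Hzq : z - ha q = 0) by lra.
      unfold Ap, slp. rewrite Hzq. rewrite <- E2. subst z. pose proof (chain_len _ Hc q (or_introl eq_refl)) as Hq0; unfold lenp in Hq0. field. lra.
    + pose proof (chain_sorted t' h Hc q Hq'). destruct Hc as [Hh _]. unfold lenp in Hh. lra.
  - destruct Hq as [<-|Hq]; [cbv [inp ha hb fst snd] in Hz; lra|].
    apply IH; auto. destruct Hc as [_ [_ Hc]]; exact Hc.
  - destruct Hq as [<-|Hq]; [cbv [inp ha hb fst snd] in Hz; lra|].
    apply IH; auto. destruct Hc as [_ [_ Hc]]; exact Hc.
Qed.

Lemma slope_chain : forall l q z, chain l -> In q l -> ha q < z < hb q -> slope_pieces l z = slp q.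
Proof.
  induction l as [|p t IH]; intros q z Hc Hq Hz; [contradiction|].
  destruct p as [[[a b] fa] fb]. simpl slope_pieces.
  pose proof (chain_sorted t _ Hc) as Hs. tsimp.
  destruct (Rle_dec a z) as [h1|h1]; [destruct (Rle_dec z b) as [h2|h2]|].
  - destruct Hq as [<-|Hq]; [reflexivity|]. pose proof (Hs q Hq). lra.
  - destruct Hq as [<-|Hq]; [cbv [ha hb fst snd] in Hz; lra|].
    apply IH; auto. destruct Hc as [_ [_ Hc]]; exact Hc.
  - destruct Hq as [<-|Hq]; [cbv [ha hb fst snd] in Hz; lra|].
    apply IH; auto. destruct Hc as [_ [_ Hc]]; exact Hc.
Qed.

Section L.
Variable lam : R.

Lemma chain_flat : forall l, chain l -> chain (flat_map (refine_piece lam) l).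
Proof.
  induction l as [|p t IH]; simpl; intros Hc; [exact I|].
  destruct Hc as [Hl [Hadj Hc]].
  destruct p as [[[a b] fa] fb]. tsimp.
  simpl. unfold lenp, ha, hb, hfa, hfb; simpl.
  repeat split; try lra; try (field; lra).
  - destruct t as [|q t']; simpl; [exact I|].
    destruct q as [[[a' b'] fa'] fb']. simpl. simpl in Hadj. unfold ha,hb,hfa,hfb in Hadj; simpl in Hadj.
    exact Hadj.
  - apply IH; exact Hc.
Qed.
End L.

Section L.
Variable lam : R.
Hypothesis Hlam : 1/6 < lam < 5/6.

Definition ch (i : nat) (p : piece) : piece := nth i (refine_piece lam p) p.

Lemma chain_pieces n : chain (pieces lam n).
Proof. induction n; simpl. - unfold lenp; simpl; unfold ha,hb; simpl; lra. - apply chain_flat; auto. Qed.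

Lemma ch_in n p i : In p (pieces lam n) -> (i < 4)%nat -> In (ch i p) (pieces lam (S n)).
Proof.
  intros Hp Hi. simpl. apply in_flat_map. exists p. split; auto.
  unfold ch. apply nth_In. destruct p as [[[a b] fa] fb]. simpl. lia.
Qed.

Lemma len_pos n p : In p (pieces lam n) -> 0 < lenp p.
Proof. intros; eapply chain_len; [apply chain_pieces|eauto]. Qed.

Lemma Fn_eval n p z : In p (pieces lam n) -> inp p z -> Defs.Fn lam n z = Ap p z.
Proof. intros; unfold Fn; apply eval_chain; auto; apply chain_pieces. Qed.

Lemma W_ge1 p : 1 <= Wp p.
Proof. unfold Wp. rewrite <- sqrt_1 at 1. apply sqrt_le_1_alt. pose proof (pow2_ge_0 (slp p)). lra. Qed.

Lemma W_ge_abs p : Rabs (slp p) <= Wp p.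
Proof. unfold Wp. rewrite <- (sqrt_pow2 (Rabs (slp p))) by apply Rabs_pos. apply sqrt_le_1_alt.
  rewrite RPow_abs. pose proof (pow2_ge_0 (slp p)). rewrite Rabs_right by lra. lra. Qed.

Ltac pd p := let a := fresh "a" in let b := fresh "b" in let fa := fresh "fa" in let fb := fresh "fb" in
  destruct p as [[[a b] fa] fb]; unfold ch, refine_piece; cbn [nth]; tsimp.

Lemma ch0_geo p : 0 < lenp p -> ha (ch 0 p) = ha p /\ hb (ch 0 p) = ha p + lenp p / 3 /\ hfa (ch 0 p) = hfa p /\ slp (ch 0 p) = slp p.
Proof. intros H. pd p. repeat split; try ring; field; lra. Qed.
Lemma ch3_geo p : 0 < lenp p -> ha (ch 3 p) = ha p + 2 * lenp p / 3 /\ hb (ch 3 p) = hb p /\ hfb (ch 3 p) = hfb p /\ slp (ch 3 p) = slp p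
  /\ hfa (ch 3 p) = Ap p (ha p + 2 * lenp p / 3).
Proof. intros H. pd p. repeat split; try ring; field; lra. Qed.
Lemma ch1_geo p : 0 < lenp p -> ha (ch 1 p) = ha p + lenp p / 3 /\ hb (ch 1 p) = ha p + lenp p / 2 /\ slp (ch 1 p) = slp p + 6 * lam * Wp p
  /\ hfa (ch 1 p) = Ap p (ha p + lenp p / 3).
Proof. intros H. pd p. repeat split; try ring; field; lra. Qed.
Lemma ch2_geo p : 0 < lenp p -> ha (ch 2 p) = ha p + lenp p / 2 /\ hb (ch 2 p) = ha p + 2 * lenp p / 3 /\ slp (ch 2 p) = slp p - 6 * lam * Wp p
  /\ hfa (ch 2 p) = Ap p (ha p + lenp p / 2) + lam * lenp p * Wp p.
Proof. intros H. pd p. repeat split; try ring; field; lra. Qed.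

Lemma W_sq p : Wp p ^ 2 = 1 + slp p ^ 2.
Proof. unfold Wp. rewrite pow2_sqrt; auto. pose proof (pow2_ge_0 (slp p)); lra. Qed.

Lemma sqrt_le_of x y : 0 <= y -> x <= y ^ 2 -> sqrt x <= y.
Proof. intros. rewrite <- (sqrt_pow2 y) by auto. apply sqrt_le_1_alt; auto. Qed.

Lemma W_new_le p s : (s = 1 \/ s = -1) -> sqrt (1 + (slp p + s * 6 * lam * Wp p) ^ 2) <= (1 + 6 * lam) * Wp p.
Proof.
  intros Hs. apply sqrt_le_of. pose proof (W_ge1 p). apply Rmult_le_pos; lra.
  pose proof (W_sq p). pose proof (W_ge_abs p). pose proof (W_ge1 p).
  assert (slp p <= Wp p /\ - slp p <= Wp p) by (split; apply Rle_trans with (Rabs (slp p)); auto; try apply Rle_abs; rewrite <- Rabs_Ropp; apply Rle_abs).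
  assert (0 <= lam * Wp p * (Wp p - slp p) /\ 0 <= lam * Wp p * (Wp p + slp p)) as [K1 K2] by (split; repeat apply Rmult_le_pos; lra).
  destruct Hs; subst; nra.
Qed.

Definition rho := (1 + 6 * lam) / 6.

Lemma ch_lenW p i : 0 < lenp p -> (i < 4)%nat -> lenp (ch i p) = lenp p / 3 /\ Wp (ch i p) = Wp p \/ lenp (ch i p) = lenp p / 6 /\ Wp (ch i p) <= (1 + 6 * lam) * Wp p.
Proof.
  intros H Hi. unfold lenp at 1 3.
  destruct i as [|[|[|[|i]]]]; try lia.
  - left. destruct (ch0_geo p H) as (E1&E2&E3&E4). rewrite E1, E2. unfold Wp; rewrite E4. split; [unfold lenp; field|reflexivity].
  - right. destruct (ch1_geo p H) as (E1&E2&E3&E4). rewrite E1, E2. unfold Wp at 1; rewrite E3. split; [unfold lenp; field|].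
    replace (6 * lam * Wp p) with (1 * 6 * lam * Wp p) by ring. apply W_new_le; auto.
  - right. destruct (ch2_geo p H) as (E1&E2&E3&E4). rewrite E1, E2. unfold Wp at 1; rewrite E3. split; [unfold lenp; field|].
    replace (slp p - 6 * lam * Wp p) with (slp p + (-1) * 6 * lam * Wp p) by ring. apply W_new_le; auto.
  - left. destruct (ch3_geo p H) as (E1&E2&E3&E4&E5). rewrite E1, E2. unfold Wp; rewrite E4. split; [unfold lenp; field|reflexivity].
Qed.

Lemma ch_lenW_rho p i : 0 < lenp p -> (i < 4)%nat -> lenp (ch i p) * Wp (ch i p) <= rho * (lenp p * Wp p) /\ 0 < lenp (ch i p).
Proof.
  intros H Hi. pose proof (W_ge1 p). unfold rho.
  destruct (ch_lenW p i H Hi) as [[E1 E2]|[E1 E2]]; rewrite E1; [rewrite E2|]; split; try lra.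
  - assert (0 <= lenp p * Wp p) by nra. nra.
  - pose proof (W_ge1 (ch i p)). nra.
Qed.

Lemma ch_diff p i z : 0 < lenp p -> (i < 4)%nat -> inp (ch i p) z -> Rabs (Ap (ch i p) z - Ap p z) <= lam * lenp p * Wp p.
Proof.
  intros H Hi Hz. pose proof (W_ge1 p). assert (0 <= lam * lenp p * Wp p) by (apply Rmult_le_pos; [|lra]; apply Rmult_le_pos; lra).
  unfold inp in Hz.
  destruct i as [|[|[|[|i]]]]; try lia.
  - destruct (ch0_geo p H) as (E1&E2&E3&E4). unfold Ap at 1. rewrite E1, E3, E4. unfold Ap. rewrite Rminus_diag, Rabs_R0. auto.
  - destruct (ch1_geo p H) as (E1&E2&E3&E4). rewrite E1, E2 in Hz. unfold Ap at 1. rewrite E1, E3, E4.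
    unfold Ap. set (W := Wp p) in *. set (l := lenp p) in *.
    replace (hfa p + slp p * (ha p + l / 3 - ha p) + (slp p + 6 * lam * W) * (z - (ha p + l / 3)) -
      (hfa p + slp p * (z - ha p))) with (6 * lam * W * (z - (ha p + l / 3))) by ring.
    apply Rabs_le. assert (0 <= lam * W * (z - (ha p + l/3)) <= lam * W * (l / 6)) by (split; apply Rmult_le_pos || apply Rmult_le_compat_l; try lra; apply Rmult_le_pos; lra). lra.
  - destruct (ch2_geo p H) as (E1&E2&E3&E4). rewrite E1, E2 in Hz. unfold Ap at 1. rewrite E1, E3, E4.
    unfold Ap. set (W := Wp p) in *. set (l := lenp p) in *.
    replace (hfa p + slp p * (ha p + l / 2 - ha p) + lam * l * W + (slp p - 6 * lam * W) * (z - (ha p + l / 2)) -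
      (hfa p + slp p * (z - ha p))) with (lam * l * W - 6 * lam * W * (z - (ha p + l / 2))) by ring.
    apply Rabs_le. assert (0 <= lam * W * (z - (ha p + l/2)) <= lam * W * (l / 6)) by (split; apply Rmult_le_pos || apply Rmult_le_compat_l; try lra; apply Rmult_le_pos; lra). lra.
  - destruct (ch3_geo p H) as (E1&E2&E3&E4&E5). unfold Ap at 1. rewrite E1, E4, E5. unfold Ap.
    replace (hfa p + slp p * (ha p + 2 * lenp p / 3 - ha p) + slp p * (z - (ha p + 2 * lenp p / 3)) - (hfa p + slp p * (z - ha p))) with 0 by ring.
    rewrite Rabs_R0; auto.
Qed.
End L.

Section L.
Variable lam : R.
Hypothesis Hlam : 1/6 < lam < 5/6.

Definition ci (z : R) (p : piece) : nat :=
  if Rle_dec z (ha p + lenp p / 3) then 0%nat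
  else if Rle_dec z (ha p + lenp p / 2) then 1%nat
  else if Rle_dec z (ha p + 2 * lenp p / 3) then 2%nat else 3%nat.
Definition cc z p := ch lam (ci z p) p.

Lemma ci_lt z p : (ci z p < 4)%nat.
Proof. unfold ci. repeat destruct Rle_dec; lia. Qed.

Lemma cc_inp z p : 0 < lenp p -> inp p z -> inp (cc z p) z.
Proof.
  intros H Hz. unfold cc, ci, inp in *.
  destruct (ch0_geo lam p H) as (A1&A2&_). destruct (ch1_geo lam p H) as (B1&B2&_).
  destruct (ch2_geo lam p H) as (C1&C2&_). destruct (ch3_geo lam p H) as (D1&D2&_).
  unfold lenp in *.
  repeat destruct Rle_dec; [rewrite A1, A2|rewrite B1,B2|rewrite C1,C2|rewrite D1,D2]; unfold lenp; lra.
Qed.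

Definition Dsq (J : piece) (z : R) (j : nat) : piece := Nat.iter j (cc z) J.

Lemma Dsq_props k J z : In J (pieces lam k) -> inp J z -> forall j,
  In (Dsq J z j) (pieces lam (j + k)) /\ inp (Dsq J z j) z /\
  lenp (Dsq J z j) * Wp (Dsq J z j) <= rho lam ^ j * (lenp J * Wp J).
Proof.
  intros HJ Hz. induction j as [|j [IH1 [IH2 IH3]]].
  - simpl. split; [auto|split; [exact Hz|lra]].
  - pose proof (len_pos lam _ _ IH1) as Hl.
    change (Dsq J z (S j)) with (cc z (Dsq J z j)). split; [|split].
    + apply ch_in; auto. apply ci_lt.
    + apply cc_inp; auto.
    + destruct (ch_lenW_rho lam Hlam _ _ Hl (ci_lt z (Dsq J z j))) as [H1 _].
      unfold cc. simpl pow. assert (0 <= rho lam) by (unfold rho; lra). 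
      apply Rle_trans with (rho lam * (lenp (Dsq J z j) * Wp (Dsq J z j))); auto.
      rewrite Rmult_assoc. apply Rmult_le_compat_l; auto.
Qed.

Definition Kc := lam / (1 - rho lam).

Lemma rho_bounds : 0 < rho lam < 1.
Proof. unfold rho; lra. Qed.

Lemma Dsq_step k J z j : In J (pieces lam k) -> inp J z ->
  Rabs (Defs.Fn lam (S j + k) z - Defs.Fn lam (j + k) z) <= lam * (rho lam ^ j * (lenp J * Wp J)).
Proof.
  intros HJ Hz. destruct (Dsq_props k J z HJ Hz j) as [H1 [H2 H3]].
  destruct (Dsq_props k J z HJ Hz (S j)) as [H1' [H2' _]].
  rewrite (Fn_eval lam _ _ _ H1' H2'), (Fn_eval lam _ _ _ H1 H2).
  pose proof (len_pos lam _ _ H1) as Hl.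
  change (Dsq J z (S j)) with (cc z (Dsq J z j)). unfold cc.
  eapply Rle_trans; [apply ch_diff; auto; try apply ci_lt; apply cc_inp; auto|].
  rewrite Rmult_assoc. apply Rmult_le_compat_l; lra.
Qed.

Lemma Dsq_cauchy k J z : In J (pieces lam k) -> inp J z -> forall m n, (m <= n)%nat ->
  Rabs (Defs.Fn lam (n + k) z - Defs.Fn lam (m + k) z) <= Kc * (lenp J * Wp J) * (rho lam ^ m - rho lam ^ n).
Proof.
  intros HJ Hz m n Hmn. induction Hmn.
  - unfold Rminus. rewrite !Rplus_opp_r, Rabs_R0, Rmult_0_r. lra.
  - eapply Rle_trans.
    + replace (Defs.Fn lam (S m0 + k) z - Defs.Fn lam (m + k) z) with
        ((Defs.Fn lam (S m0 + k) z - Defs.Fn lam (m0 + k) z) + (Defs.Fn lam (m0 + k) z - Defs.Fn lam (m + k) z)) by ring.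
      apply Rabs_triang.
    + pose proof (Dsq_step k J z m0 HJ Hz). 
      assert (Kc * (1 - rho lam) = lam) by (unfold Kc; pose proof rho_bounds; field; lra).
      simpl pow. nra.
Qed.

Lemma pow_le_dec x m n : 0 <= x <= 1 -> (m <= n)%nat -> x ^ n <= x ^ m.
Proof.
  intros Hx H. induction H; [lra|]. simpl. apply Rle_trans with (x ^ m0); auto.
  pose proof (pow_le x m0 (proj1 Hx)). nra.
Qed.

Lemma Kc_pos : 0 < Kc.
Proof. unfold Kc. pose proof rho_bounds. apply Rdiv_lt_0_compat; lra. Qed.

Lemma F_lim k J z : In J (pieces lam k) -> inp J z ->
  is_lim_seq (fun j => Defs.Fn lam (j + k) z) (F lam z) /\
  Rabs (F lam z - Ap J z) <= Kc * (lenp J * Wp J).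
Proof.
  intros HJ Hz. set (a := fun j => Defs.Fn lam (j + k) z).
  pose proof (len_pos lam _ _ HJ) as Hl. pose proof (W_ge1 J) as HW.
  assert (HB : 0 < Kc * (lenp J * Wp J)) by (pose proof Kc_pos; apply Rmult_lt_0_compat; auto; nra).
  pose proof rho_bounds as Hr.
  assert (Hc : ex_finite_lim_seq a).
  { apply ex_lim_seq_cauchy_corr. intros eps.
    destruct (pow_lt_1_zero (rho lam)) with (y := eps / (Kc * (lenp J * Wp J))) as [N HN].
    { rewrite Rabs_right; lra. }
    { apply Rdiv_lt_0_compat; auto. apply cond_pos. }
    exists N. intros n m Hn Hm.
    assert (HN' : rho lam ^ N < eps / (Kc * (lenp J * Wp J))).
    { specialize (HN N (le_n N)). rewrite Rabs_right in HN; auto. apply Rle_ge, pow_le; lra. }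
    assert (Heps : Kc * (lenp J * Wp J) * rho lam ^ N < eps).
    { set (B := Kc * (lenp J * Wp J)) in *. assert (E: eps / B * B = eps) by (field; lra).
      assert (0 < (eps / B - rho lam ^ N) * B) by (apply Rmult_lt_0_compat; lra). nra. }
    destruct (Nat.le_ge_cases m n) as [Hmn|Hmn].
    - pose proof (Dsq_cauchy k J z HJ Hz m n Hmn). unfold a.
      pose proof (pow_le (rho lam) n ltac:(lra)). pose proof (pow_le_dec (rho lam) N m ltac:(lra) Hm). nra.
    - pose proof (Dsq_cauchy k J z HJ Hz n m Hmn). unfold a. rewrite Rabs_minus_sym.
      pose proof (pow_le (rho lam) m ltac:(lra)). pose proof (pow_le_dec (rho lam) N n ltac:(lra) Hn). nra. }
  destruct Hc as [l Hlim].
  assert (HF : F lam z = l).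
  { unfold F. rewrite <- (Lim_seq_incr_n (fun n => Defs.Fn lam n z) k). fold a. rewrite (is_lim_seq_unique _ _ Hlim). reflexivity. }
  rewrite HF. split; auto.
  assert (Hb : forall n, Rabs (a n - Ap J z) <= Kc * (lenp J * Wp J)).
  { intros n. pose proof (Dsq_cauchy k J z HJ Hz 0 n (Nat.le_0_l n)). unfold a.
    replace (Ap J z) with (Defs.Fn lam (0 + k) z) by (apply Fn_eval; auto).
    simpl pow in H. pose proof (pow_le (rho lam) n ltac:(lra)). nra. }
  assert (Hl2 : is_lim_seq (fun n => Rabs (a n - Ap J z)) (Rabs (l - Ap J z))).
  { apply (is_lim_seq_abs _ (Finite (l - Ap J z))). apply is_lim_seq_minus'; auto. apply is_lim_seq_const. }
  pose proof (is_lim_seq_le _ _ _ _ Hb Hl2 (is_lim_seq_const (Kc * (lenp J * Wp J)))). simpl in H. exact H.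
Qed.

Lemma F_ha k J : In J (pieces lam k) -> F lam (ha J) = hfa J.
Proof.
  intros HJ. pose proof (len_pos lam _ _ HJ) as Hl.
  assert (Hz : inp J (ha J)) by (unfold inp, lenp in *; lra).
  destruct (F_lim k J (ha J) HJ Hz) as [H _].
  assert (E : forall j, Defs.Fn lam (j + k) (ha J) = hfa J).
  { intros j. destruct (Dsq_props k J (ha J) HJ Hz j) as [H1 [H2 _]].
    rewrite (Fn_eval lam _ _ _ H1 H2).
    assert (ha (Dsq J (ha J) j) = ha J /\ hfa (Dsq J (ha J) j) = hfa J) as [E1 E2].
    { induction j; [auto|]. destruct (Dsq_props k J (ha J) HJ Hz j) as [G1 [G2 _]].
      destruct IHj as [E1 E2]; auto. change (Dsq J (ha J) (S j)) with (cc (ha J) (Dsq J (ha J) j)).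
      pose proof (len_pos lam _ _ G1) as Hl'.
      unfold cc. assert (ci (ha J) (Dsq J (ha J) j) = 0%nat) as ->.
      { unfold ci. destruct Rle_dec as [|n]; auto. exfalso; apply n. rewrite E1. unfold lenp in *; lra. }
      destruct (ch0_geo lam _ Hl') as (A1&_&A3&_). rewrite A1, A3; auto. }
    unfold Ap. rewrite E1, E2. ring. }
  apply (is_lim_seq_ext _ (fun _ => hfa J)) in H; auto.
  pose proof (is_lim_seq_unique _ _ H) as U1. rewrite Lim_seq_const in U1. congruence.
Qed.
End L.

Section L.
Variable lam : R.
Hypothesis Hlam : 1/6 < lam < 5/6.

Definition K1 := 2 * Kc lam + 1.

Lemma K1_pos : 0 < K1.
Proof. unfold K1. pose proof (Kc_pos lam Hlam). lra. Qed.

Lemma Fbase k J z z' : In J (pieces lam k) -> inp J z -> inp J z' ->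
  Rabs (F lam z - F lam z') <= K1 * Wp J * lenp J.
Proof.
  intros HJ Hz Hz'. destruct (F_lim lam Hlam k J z HJ Hz) as [_ H1].
  destruct (F_lim lam Hlam k J z' HJ Hz') as [_ H2].
  assert (H3 : Rabs (Ap J z - Ap J z') <= Wp J * lenp J).
  { unfold Ap. replace (hfa J + slp J * (z - ha J) - (hfa J + slp J * (z' - ha J))) with (slp J * (z - z')) by ring.
    rewrite Rabs_mult. apply Rmult_le_compat; try apply Rabs_pos. apply W_ge_abs.
    unfold inp, lenp in *. apply Rabs_le; lra. }
  replace (F lam z - F lam z') with ((F lam z - Ap J z) + (Ap J z - Ap J z') - (F lam z' - Ap J z')) by ring.
  unfold K1. eapply Rle_trans; [apply Rabs_triang|]. 
  eapply Rle_trans; [apply Rplus_le_compat; [apply Rabs_triang| rewrite Rabs_Ropp; apply H2]|]. lra.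
Qed.

Lemma edge_left_j : forall j k J z, In J (pieces lam k) -> inp J z -> lenp J * (1/3) ^ j < z - ha J ->
  exists s, 0 <= s <= lenp J /\ s <= 3 * (z - ha J) /\ Rabs (F lam z - F lam (ha J)) <= K1 * Wp J * s.
Proof.
  induction j as [|j IH]; intros k J z HJ Hz Hj.
  - unfold inp, lenp in *. simpl in Hj. lra.
  - pose proof (len_pos lam _ _ HJ) as Hl.
    destruct (Rlt_dec (lenp J / 3) (z - ha J)) as [Hb|Hb].
    + exists (lenp J). split; [lra|split; [lra|]]. apply Fbase with k; auto. unfold inp, lenp in *; lra.
    + destruct (ch0_geo lam J Hl) as (A1&A2&A3&A4).
      assert (Hc : In (ch lam 0 J) (pieces lam (S k))) by (apply ch_in; auto).
      destruct (IH (S k) (ch lam 0 J) z Hc) as [s [Hs1 [Hs2 Hs3]]].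
      * unfold inp. rewrite A1, A2. unfold inp in Hz. lra.
      * unfold lenp at 1. rewrite A1, A2. simpl pow in Hj. replace (ha J + lenp J / 3 - ha J) with (lenp J * (1/3)) by lra. lra.
      * exists s. unfold lenp at 1 in Hs1. rewrite A1, A2 in Hs1. rewrite A1 in Hs2, Hs3.
        unfold Wp at 1 in Hs3. rewrite A4 in Hs3. fold (Wp J) in Hs3. repeat split; auto; lra.
Qed.

Lemma edge_right_j : forall j k J z, In J (pieces lam k) -> inp J z -> lenp J * (1/3) ^ j < hb J - z ->
  exists s, 0 <= s <= lenp J /\ s <= 3 * (hb J - z) /\ Rabs (F lam z - F lam (hb J)) <= K1 * Wp J * s.
Proof.
  induction j as [|j IH]; intros k J z HJ Hz Hj.
  - unfold inp, lenp in *. simpl in Hj. lra.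
  - pose proof (len_pos lam _ _ HJ) as Hl.
    destruct (Rlt_dec (lenp J / 3) (hb J - z)) as [Hb|Hb].
    + exists (lenp J). split; [lra|split; [lra|]]. apply Fbase with k; auto. unfold inp, lenp in *; lra.
    + destruct (ch3_geo lam J Hl) as (A1&A2&A3&A4&A5).
      assert (Hc : In (ch lam 3 J) (pieces lam (S k))) by (apply ch_in; auto).
      destruct (IH (S k) (ch lam 3 J) z Hc) as [s [Hs1 [Hs2 Hs3]]].
      * unfold inp. rewrite A1, A2. unfold inp, lenp in *. lra.
      * unfold lenp at 1. rewrite A1, A2. simpl pow in Hj. unfold lenp in *. lra.
      * exists s. unfold lenp at 1 in Hs1. rewrite A1, A2 in Hs1. rewrite A2 in Hs2, Hs3.
        unfold Wp at 1 in Hs3. rewrite A4 in Hs3. fold (Wp J) in Hs3. unfold lenp in *. repeat split; auto; lra.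
Qed.

Lemma third_small l d : 0 < l -> 0 < d -> exists j, l * (1/3) ^ j < d.
Proof.
  intros Hl Hd. destruct (pow_lt_1_zero (1/3)) with (y := d / l) as [N HN].
  - rewrite Rabs_right; lra.
  - apply Rdiv_lt_0_compat; auto.
  - exists N. specialize (HN N (le_n N)). rewrite Rabs_right in HN by (apply Rle_ge, pow_le; lra).
    assert (E : d / l * l = d) by (field; lra).
    assert (0 < (d / l - (1/3) ^ N) * l) by (apply Rmult_lt_0_compat; lra). nra.
Qed.

Lemma edge_left k J z : In J (pieces lam k) -> inp J z ->
  exists s, 0 <= s <= lenp J /\ s <= 3 * Rabs (z - ha J) /\ Rabs (F lam z - F lam (ha J)) <= K1 * Wp J * s.
Proof.
  intros HJ Hz. pose proof (len_pos lam _ _ HJ) as Hl. unfold inp in Hz.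
  destruct (Req_dec z (ha J)) as [E|E].
  - exists 0. rewrite E. unfold Rminus. rewrite !Rplus_opp_r, Rabs_R0, Rmult_0_r. repeat split; lra.
  - destruct (third_small (lenp J) (z - ha J)) as [j Hj]; auto. lra.
    destruct (edge_left_j j k J z HJ (conj (proj1 Hz) (proj2 Hz)) Hj) as [s Hs]. exists s.
    rewrite Rabs_right by lra. exact Hs.
Qed.

Lemma edge_right k J z : In J (pieces lam k) -> inp J z ->
  exists s, 0 <= s <= lenp J /\ s <= 3 * Rabs (z - hb J) /\ Rabs (F lam z - F lam (hb J)) <= K1 * Wp J * s.
Proof.
  intros HJ Hz. pose proof (len_pos lam _ _ HJ) as Hl. unfold inp in Hz.
  destruct (Req_dec z (hb J)) as [E|E].
  - exists 0. rewrite E. unfold Rminus. rewrite !Rplus_opp_r, Rabs_R0, Rmult_0_r. repeat split; lra.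
  - destruct (third_small (lenp J) (hb J - z)) as [j Hj]; auto. lra.
    destruct (edge_right_j j k J z HJ (conj (proj1 Hz) (proj2 Hz)) Hj) as [s Hs]. exists s.
    rewrite Rabs_left1 by lra. replace (- (z - hb J)) with (hb J - z) by ring. exact Hs.
Qed.

Definition bp J e := e = ha J \/ e = ha J + lenp J / 3 \/ e = ha J + lenp J / 2 \/ e = ha J + 2 * lenp J / 3 \/ e = hb J.

Lemma bp_child J i : 0 < lenp J -> (i < 4)%nat -> bp J (ha (ch lam i J)) /\ bp J (hb (ch lam i J)).
Proof.
  intros Hl Hi. unfold bp.
  destruct i as [|[|[|[|i]]]]; try lia.
  - destruct (ch0_geo lam J Hl) as (A1&A2&_). rewrite A1, A2. tauto.
  - destruct (ch1_geo lam J Hl) as (A1&A2&_). rewrite A1, A2. tauto.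
  - destruct (ch2_geo lam J Hl) as (A1&A2&_). rewrite A1, A2. tauto.
  - destruct (ch3_geo lam J Hl) as (A1&A2&_). rewrite A1, A2. tauto.
Qed.

Lemma ch_small J i : 0 < lenp J -> (i < 4)%nat -> lenp (ch lam i J) <= lenp J /\ Wp (ch lam i J) <= (1 + 6 * lam) * Wp J.
Proof.
  intros Hl Hi. pose proof (W_ge1 J). destruct (ch_lenW lam Hlam J i Hl Hi) as [[E1 E2]|[E1 E2]]; rewrite E1; split; try lra.
  rewrite E2. nra.
Qed.

Lemma left_child J e : 0 < lenp J -> bp J e -> e < hb J -> exists i, (i < 4)%nat /\ ha (ch lam i J) = e /\ e + lenp J / 6 <= hb (ch lam i J).
Proof.
  intros Hl He Hlt. unfold bp in He.
  destruct (ch0_geo lam J Hl) as (A1&A2&_). destruct (ch1_geo lam J Hl) as (B1&B2&_).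
  destruct (ch2_geo lam J Hl) as (C1&C2&_). destruct (ch3_geo lam J Hl) as (D1&D2&_).
  destruct He as [E|[E|[E|[E|E]]]].
  - exists 0%nat. rewrite A1, A2. repeat split; [lia|auto|lra].
  - exists 1%nat. rewrite B1, B2. repeat split; [lia|auto|lra].
  - exists 2%nat. rewrite C1, C2. repeat split; [lia|auto|lra].
  - exists 3%nat. rewrite D1, D2. unfold lenp in *. repeat split; [lia|auto|lra].
  - lra.
Qed.

Lemma right_child J e : 0 < lenp J -> bp J e -> ha J < e -> exists i, (i < 4)%nat /\ hb (ch lam i J) = e /\ ha (ch lam i J) <= e - lenp J / 6.
Proof.
  intros Hl He Hlt. unfold bp in He.
  destruct (ch0_geo lam J Hl) as (A1&A2&_). destruct (ch1_geo lam J Hl) as (B1&B2&_).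
  destruct (ch2_geo lam J Hl) as (C1&C2&_). destruct (ch3_geo lam J Hl) as (D1&D2&_).
  destruct He as [E|[E|[E|[E|E]]]].
  - lra.
  - exists 0%nat. rewrite A1, A2. repeat split; [lia|auto|lra].
  - exists 1%nat. rewrite B1, B2. repeat split; [lia|auto|lra].
  - exists 2%nat. rewrite C1, C2. repeat split; [lia|auto|lra].
  - exists 3%nat. rewrite D1, D2. unfold lenp in *. repeat split; [lia|auto|lra].
Qed.

Definition K2 := K1 * (1 + 6 * lam).

Lemma bp_lemma k J e z : In J (pieces lam k) -> bp J e -> inp J z ->
  exists s, 0 <= s <= lenp J /\ s <= 6 * Rabs (z - e) /\ Rabs (F lam z - F lam e) <= K2 * Wp J * s.
Proof.
  intros HJ He Hz. pose proof (len_pos lam _ _ HJ) as Hl. pose proof K1_pos as HK. pose proof (W_ge1 J) as HW.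
  assert (HeJ : inp J e) by (unfold bp, inp, lenp in *; lra).
  destruct (Rle_dec (lenp J / 6) (Rabs (z - e))) as [Hbig|Hsm].
  - exists (lenp J). split; [lra|split; [lra|]].
    eapply Rle_trans; [apply Fbase with k; eauto|]. unfold K2.
    assert (0 <= K1 * Wp J * lenp J) by (repeat apply Rmult_le_pos; lra). nra.
  - destruct (Req_dec z e) as [E|E].
    { exists 0. rewrite E. unfold Rminus. rewrite !Rplus_opp_r, Rabs_R0, !Rmult_0_r. repeat split; lra. }
    destruct (Rlt_dec e z) as [Hez|Hez].
    + destruct (left_child J e Hl He) as [i [Hi [E1 E2]]]. unfold inp in Hz; lra.
      assert (Hc : In (ch lam i J) (pieces lam (S k))) by (apply ch_in; auto).
      rewrite Rabs_right in Hsm by lra.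
      destruct (edge_left (S k) (ch lam i J) z Hc) as [s [Hs1 [Hs2 Hs3]]].
      { unfold inp. rewrite E1. lra. }
      destruct (ch_small J i Hl Hi) as [G1 G2].
      exists s. rewrite E1 in Hs2, Hs3. split; [lra|split; [pose proof (Rabs_pos (z - e)); lra|]].
      eapply Rle_trans; [exact Hs3|]. unfold K2.
      assert (0 <= K1 * s) by (apply Rmult_le_pos; lra).
      replace (K1 * (1 + 6 * lam) * Wp J * s) with (K1 * s * ((1 + 6 * lam) * Wp J)) by ring.
      replace (K1 * Wp (ch lam i J) * s) with (K1 * s * Wp (ch lam i J)) by ring.
      apply Rmult_le_compat_l; auto.
    + destruct (right_child J e Hl He) as [i [Hi [E1 E2]]]. unfold inp in Hz; lra.
      assert (Hc : In (ch lam i J) (pieces lam (S k))) by (apply ch_in; auto).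
      rewrite Rabs_left1 in Hsm by lra.
      destruct (edge_right (S k) (ch lam i J) z Hc) as [s [Hs1 [Hs2 Hs3]]].
      { unfold inp. rewrite E1. lra. }
      destruct (ch_small J i Hl Hi) as [G1 G2].
      exists s. rewrite E1 in Hs2, Hs3. split; [lra|split; [pose proof (Rabs_pos (z - e)); lra|]].
      eapply Rle_trans; [exact Hs3|]. unfold K2.
      assert (0 <= K1 * s) by (apply Rmult_le_pos; lra).
      replace (K1 * (1 + 6 * lam) * Wp J * s) with (K1 * s * ((1 + 6 * lam) * Wp J)) by ring.
      replace (K1 * Wp (ch lam i J) * s) with (K1 * s * Wp (ch lam i J)) by ring.
      apply Rmult_le_compat_l; auto.
Qed.
End L.

Section L.
Variable lam : R.
Hypothesis Hlam : 1/6 < lam < 5/6.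

Definition sgn_ok (s : bool) (m : R) := if s then 0 <= m else m <= 0.
Definition lenfac (u : nat) : R := match u with 1%nat | 2%nat => 1/6 | _ => 1/3 end.
Definition newmu (u : nat) (mu W : R) : R :=
  match u with 1%nat => mu + 6 * lam * W | 2%nat => 6 * lam * W - mu | _ => mu end.
Definition pos_ok (s : bool) (J : piece) (x t : R) := if s then x = ha J + t * lenp J else x = hb J - t * lenp J.

Lemma U_range t : (Defs.U t < 4)%nat.
Proof. unfold Defs.U. repeat destruct Rlt_dec; lia. Qed.

Lemma step_geo J s t x : 0 < lenp J -> 0 <= t <= 1 -> pos_ok s J x t -> sgn_ok s (slp J) ->
  let u := Defs.U t in let J' := ch lam (if s then u else 3 - u)%nat J in
  let s' := xorb s (Nat.eqb u 2) in
  0 <= Defs.T t <= 1 /\ pos_ok s' J' x (Defs.T t) /\ sgn_ok s' (slp J') /\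
  Rabs (slp J') = newmu u (Rabs (slp J)) (Wp J) /\ lenp J' = lenfac u * lenp J.
Proof.
  intros Hl Ht Hp Hs. pose proof (W_ge1 J) as HW. pose proof (W_ge_abs J) as HWa.
  destruct (ch0_geo lam J Hl) as (A1&A2&A3&A4). destruct (ch1_geo lam J Hl) as (B1&B2&B3&B4).
  destruct (ch2_geo lam J Hl) as (C1&C2&C3&C4). destruct (ch3_geo lam J Hl) as (D1&D2&D3&D4&D5).
  assert (HWl : Wp J < 6 * lam * Wp J) by nra.
  assert (HWb : slp J <= Wp J /\ - slp J <= Wp J) by (pose proof (Rle_abs (slp J)); pose proof (Rle_abs (- slp J)) as HH; rewrite Rabs_Ropp in HH; lra).
  unfold pos_ok, sgn_ok in *. unfold Defs.U, Defs.T.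
  destruct (Rlt_dec t (1/3)); [|destruct (Rlt_dec t (1/2)); [|destruct (Rlt_dec t (2/3))]];
  destruct s; simpl; unfold lenp in *; cbn [newmu lenfac].
  all: rewrite ?A1, ?A2, ?A4, ?B1, ?B2, ?B3, ?C1, ?C2, ?C3, ?D1, ?D2, ?D4.
  all: repeat split; try lra.
  all: try (rewrite (Rabs_right (slp J)) by lra); try (rewrite (Rabs_left1 (slp J)) by lra).
  all: try (rewrite Rabs_right by lra; lra); try (rewrite Rabs_left1 by lra; lra).

Qed.

Lemma digit_range x n : (digit x n < 4)%nat.
Proof. apply U_range. Qed.

Fixpoint Jx (x : R) (n : nat) : piece * bool :=
  match n with
  | O => ((0, 1, 0, 0), true)
  | S n => let '(J, s) := Jx x n in let u := digit x n in
           (ch lam (if s then u else 3 - u)%nat J, xorb s (Nat.eqb u 2))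
  end.

Definition tt (x : R) (n : nat) := Nat.iter n Defs.T x.

Lemma Jx_inv x : 0 <= x <= 1 -> forall n,
  In (fst (Jx x n)) (pieces lam n) /\ 0 <= tt x n <= 1 /\ pos_ok (snd (Jx x n)) (fst (Jx x n)) x (tt x n)
  /\ sgn_ok (snd (Jx x n)) (slp (fst (Jx x n))).
Proof.
  intros Hx. induction n as [|n [H1 [H2 [H3 H4]]]].
  - simpl. unfold pos_ok, sgn_ok, tt. simpl. tsimp. repeat split; try lra. left; reflexivity.
  - simpl. destruct (Jx x n) as [J s] eqn:E. simpl in *.
    pose proof (len_pos lam _ _ H1) as Hl.
    destruct (step_geo J s (tt x n) x Hl H2 H3 H4) as (G1&G2&G3&G4&G5).
    unfold digit. fold (tt x n). split; [apply ch_in; auto; pose proof (digit_range x n) as HR; unfold digit in HR; fold (tt x n) in HR; destruct s; [lia|destruct (Defs.U (tt x n)) as [|[|[|]]]; simpl; lia]|].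
    change (tt x (S n)) with (Defs.T (tt x n)). auto.
Qed.

Lemma Jx_step x : 0 <= x <= 1 -> forall n,
  let J := fst (Jx x n) in let J' := fst (Jx x (S n)) in
  (exists i, (i < 4)%nat /\ J' = ch lam i J) /\
  Rabs (slp J') = newmu (digit x n) (Rabs (slp J)) (Wp J) /\ lenp J' = lenfac (digit x n) * lenp J.
Proof.
  intros Hx n. destruct (Jx_inv x Hx n) as [H1 [H2 [H3 H4]]]. simpl.
  destruct (Jx x n) as [J s] eqn:E. simpl in *.
  pose proof (len_pos lam _ _ H1) as Hl.
  destruct (step_geo J s (tt x n) x Hl H2 H3 H4) as (G1&G2&G3&G4&G5).
  unfold digit. fold (tt x n). split; [|split; auto].
  eexists; split; [|reflexivity]. pose proof (digit_range x n) as HR; unfold digit in HR; fold (tt x n) in HR; destruct s; [lia|destruct (Defs.U (tt x n)) as [|[|[|]]]; simpl; lia].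
Qed.
End L.


Section L.
Variable lam : R.
Hypothesis Hlam : 1/6 < lam < 5/6.

Lemma ln_pos x : 1 < x -> 0 < ln x.
Proof. intros. rewrite <- ln_1. apply ln_increasing; lra. Qed.

Lemma ln3_pos : 0 < ln 3. Proof. apply ln_pos; lra. Qed.
Lemma ln36 : ln 3 < ln 6. Proof. apply ln_increasing; lra. Qed.

Definition gg (u : nat) : R := match u with 1%nat => ln (6 * lam + 1) | 2%nat => ln (6 * lam - 1) | _ => 0 end.
Definition dl (u : nat) : R := match u with 1%nat | 2%nat => ln 6 | _ => ln 3 end.
Definition fct (u : nat) : R := match u with 1%nat => 1 + 6 * lam | 2%nat => 6 * lam - 1 | _ => 1 end.

Definition Dn x n := INR (beta 0 x n + beta 3 x n) * ln 3 + INR (beta 1 x n + beta 2 x n) * ln 6.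
Definition Nn x n := INR (beta 1 x n) * ln (6 * lam + 1) + INR (beta 2 x n) * ln (6 * lam - 1).

Lemma ratio_eq x n : ratio lam x n = Nn x n / Dn x n.
Proof. reflexivity. Qed.

Lemma beta_S i x n : beta i x (S n) = (beta i x n + if Nat.eqb (digit x n) i then 1 else 0)%nat.
Proof. unfold beta. rewrite seq_S, filter_app, length_app. simpl. destruct (digit x n =? i); reflexivity. Qed.

Lemma DN_S x n : Dn x (S n) = Dn x n + dl (digit x n) /\ Nn x (S n) = Nn x n + gg (digit x n).
Proof.
  unfold Dn, Nn. rewrite !beta_S. pose proof (digit_range x n).
  destruct (digit x n) as [|[|[|[|]]]]; try lia; simpl Nat.eqb; cbv iota; rewrite ?Nat.add_0_r;
  rewrite ?plus_INR; simpl; split; ring.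
Qed.

Lemma Dn_ge x n : INR n * ln 3 <= Dn x n.
Proof.
  induction n. - unfold Dn, beta. simpl. lra.
  - destruct (DN_S x n) as [E _]. rewrite E, S_INR. pose proof ln36. pose proof ln3_pos.
    assert (ln 3 <= dl (digit x n)) by (destruct (digit x n) as [|[|[|]]]; simpl; lra). lra.
Qed.

Definition c0 := ln (6 * lam + 1) / ln 6.

Lemma c0_bounds : 0 < c0 < 1.
Proof.
  unfold c0. pose proof ln36. pose proof ln3_pos.
  assert (0 < ln (6 * lam + 1) < ln 6) by (split; [apply ln_pos|apply ln_increasing]; lra).
  split; [apply Rdiv_lt_0_compat|apply (Rmult_lt_reg_r (ln 6)); [lra|]; unfold Rdiv; rewrite Rmult_assoc, Rinv_l]; lra.
Qed.

Lemma Nn_le x n : Nn x n <= c0 * Dn x n.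
Proof.
  induction n. - unfold Nn, Dn, beta. simpl. lra.
  - destruct (DN_S x n) as [E1 E2]. rewrite E1, E2. pose proof c0_bounds. pose proof ln3_pos. pose proof ln36.
    assert (gg (digit x n) <= c0 * dl (digit x n)).
    { assert (E : c0 * ln 6 = ln (6 * lam + 1)) by (unfold c0; field; lra).
      assert (ln (6 * lam - 1) < ln (6 * lam + 1)) by (apply ln_increasing; lra).
      destruct (digit x n) as [|[|[|]]]; simpl; nra. }
    nra.
Qed.

Lemma ratio_le_c0 x n : ratio lam x n <= c0.
Proof.
  rewrite ratio_eq. pose proof (Nn_le x n). pose proof (Dn_ge x n). pose proof c0_bounds.
  pose proof ln3_pos. pose proof (pos_INR n).
  destruct (Req_dec (Dn x n) 0) as [E|E].
  - rewrite E. unfold Rdiv. rewrite Rinv_0, Rmult_0_r. lra.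
  - assert (0 < Dn x n) by nra. apply (Rmult_le_reg_r (Dn x n)); auto. unfold Rdiv. rewrite Rmult_assoc, Rinv_l; lra.
Qed.

Lemma newmu_lower u mu W : (u < 4)%nat -> 0 <= mu <= W -> 1 <= W ->
  fct u * mu <= newmu lam u mu W /\ ((u = 1 \/ u = 2)%nat -> 6 * lam - 1 <= newmu lam u mu W).
Proof.
  intros Hu H1 H2. destruct u as [|[|[|[|]]]]; try lia; simpl; split; try lra; try (intros [?|?]; lia); nra.
Qed.

Lemma newmu_upper u mu W eps : (u < 4)%nat -> 0 < eps -> 1 <= mu -> (1 + 3 * lam / (6 * lam - 1)) / eps <= mu ->
  W ^ 2 = 1 + mu ^ 2 -> 0 <= W -> ln (newmu lam u mu W) <= ln mu + gg u + eps.
Proof.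
  intros Hu He Hm1 Hm HW HW0.
  assert (Hup : W <= mu + 1 / (2 * mu)).
  { assert (0 < mu + 1 / (2 * mu)) by (assert (0 < 1 / (2 * mu)) by (apply Rdiv_lt_0_compat; lra); lra).
    assert (W ^ 2 <= (mu + 1 / (2 * mu)) ^ 2).
    { rewrite HW. replace ((mu + 1 / (2 * mu)) ^ 2) with (mu ^ 2 + 1 + 1 / (2 * mu) ^ 2) by (field; lra).
      assert (0 <= 1 / (2 * mu) ^ 2) by (apply Rlt_le, Rdiv_lt_0_compat; [lra|apply pow_lt; lra]). lra. }
    nra. }
  assert (HWg : mu <= W) by nra.
  assert (Hq : 3 * lam / (6 * lam - 1) / mu <= eps).
  { apply (Rmult_le_reg_r mu); [lra|]. unfold Rdiv at 1. rewrite Rmult_assoc, Rinv_l, Rmult_1_r by lra.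
    assert (0 < 3 * lam / (6 * lam - 1)) by (apply Rdiv_lt_0_compat; lra).
    apply (Rmult_le_compat_l eps) in Hm; [|lra]. unfold Rdiv in Hm. rewrite <- Rmult_assoc, (Rmult_comm eps), Rmult_assoc, Rinv_r, Rmult_1_r in Hm by lra. nra. }
  assert (Hq2 : 1 / mu <= eps).
  { apply (Rmult_le_reg_r mu); [lra|]. unfold Rdiv at 1. rewrite Rmult_assoc, Rinv_l, Rmult_1_r by lra.
    assert (0 < 3 * lam / (6 * lam - 1)) by (apply Rdiv_lt_0_compat; lra).
    apply (Rmult_le_compat_l eps) in Hm; [|lra]. unfold Rdiv in Hm. rewrite <- Rmult_assoc, (Rmult_comm eps), Rmult_assoc, Rinv_r, Rmult_1_r in Hm by lra. nra. }
  assert (Hexp : 1 + eps <= exp eps) by apply exp_ineq1_le.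
  assert (Hf : 0 < fct u) by (destruct u as [|[|[|]]]; simpl; lra).
  assert (Hgg : gg u = ln (fct u)) by (destruct u as [|[|[|]]]; simpl; try rewrite ln_1; try f_equal; lra).
  assert (Hn : newmu lam u mu W <= fct u * mu * (1 + eps)).
  { destruct u as [|[|[|[|]]]]; try lia; simpl; try nra.
    - assert (6 * lam * W <= 6 * lam * (mu + 1 / (2 * mu))) by (apply Rmult_le_compat_l; lra).
      assert (6 * lam * (1 / (2 * mu)) <= 3 * lam * eps) by
        (replace (6 * lam * (1 / (2 * mu))) with (3 * lam * (1 / mu)) by (field; lra); apply Rmult_le_compat_l; lra).
      assert (3 * lam * eps <= (1 + 6 * lam) * mu * eps) by (apply Rmult_le_compat_r; nra). nra.
    - assert (6 * lam * W <= 6 * lam * (mu + 1 / (2 * mu))) by (apply Rmult_le_compat_l; lra).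
      assert (6 * lam * (1 / (2 * mu)) <= (6 * lam - 1) * eps) by
        (replace (6 * lam * (1 / (2 * mu))) with ((6 * lam - 1) * (3 * lam / (6 * lam - 1) / mu)) by (field; lra); apply Rmult_le_compat_l; lra).
      assert ((6 * lam - 1) * eps <= (6 * lam - 1) * mu * eps) by (apply Rmult_le_compat_r; nra). nra. }
  assert (Hpos : 0 < newmu lam u mu W).
  { pose proof (newmu_lower u mu W Hu ltac:(lra) ltac:(nra)) as [G _]. nra. }
  eapply Rle_trans; [apply ln_le; [exact Hpos| exact Hn]|].
  rewrite !ln_mult by (try apply Rmult_lt_0_compat; lra). rewrite Hgg.
  assert (ln (1 + eps) <= eps) by (rewrite <- (ln_exp eps) at 2; apply ln_le; lra). lra.
Qed.
End L.

Lemma LS_le (u : nat -> R) (l : R) : (forall eps, 0 < eps -> exists N, forall n, (N <= n)%nat -> u n <= l + eps) ->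
  Rbar_le (LimSup_seq u) l.
Proof.
  intros H. destruct (ex_LimSup_seq u) as [L HL]. rewrite (is_LimSup_seq_unique _ _ HL).
  destruct L as [L| |]; simpl in *; auto.
  - destruct (Rle_dec L l) as [|Hn]; auto. exfalso.
    assert (He : 0 < (L - l) / 2) by lra.
    destruct (HL (mkposreal _ He)) as [H1 _]. destruct (H _ He) as [N HN].
    destruct (H1 N) as [n [Hn1 Hn2]]. simpl in Hn2. specialize (HN n Hn1). lra.
  - destruct (H 1 ltac:(lra)) as [N HN]. destruct (HL (l + 1) N) as [n [Hn1 Hn2]]. specialize (HN n Hn1). lra.
Qed.

Lemma LS_ev (u : nat -> R) (l : R) : Rbar_le (LimSup_seq u) l ->
  forall eps, 0 < eps -> exists N, forall n, (N <= n)%nat -> u n <= l + eps.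
Proof.
  intros H eps He. destruct (ex_LimSup_seq u) as [L HL]. rewrite (is_LimSup_seq_unique _ _ HL) in H.
  destruct L as [L| |]; simpl in *; try contradiction.
  - destruct (HL (mkposreal _ He)) as [_ [N HN]]. exists N. intros n Hn. specialize (HN n Hn). simpl in HN. lra.
  - destruct (HL (l + eps)) as [N HN]. exists N. intros n Hn. specialize (HN n Hn). lra.
Qed.

Lemma exit_lemma (P : nat -> Prop) n0 k : P n0 -> ~ P (n0 + k)%nat -> exists n, (n0 <= n)%nat /\ P n /\ ~ P (S n).
Proof.
  intros H0. induction k as [|k IH]; intros HN.
  - rewrite Nat.add_0_r in HN. contradiction.
  - destruct (Classical_Prop.classic (P (n0 + k)%nat)) as [Hp|Hp].
    + exists (n0 + k)%nat. split; [lia|split; auto]. replace (S (n0 + k)) with (n0 + S k)%nat by lia. auto.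
    + apply IH; auto.
Qed.

Section X.
Variable lam x : R.
Hypothesis Hlam : 1/6 < lam < 5/6.
Hypothesis Hx : 0 <= x <= 1.
Hypothesis HE : ~ inE x.

Definition Jn n := fst (Jx lam x n).

Lemma iter_fix c : Defs.T c = c -> forall j, Nat.iter j Defs.T c = c.
Proof. intros H j. induction j; simpl; [reflexivity|]. rewrite IHj; auto. Qed.

Lemma tt_later n k : (n <= k)%nat -> tt x k = Nat.iter (k - n) Defs.T (tt x n).
Proof. intros H. unfold tt. rewrite <- Nat.iter_add. f_equal. lia. Qed.

Lemma tt_interior n : 0 < tt x n < 1.
Proof.
  destruct (Jx_inv lam Hlam x Hx n) as [_ [H _]].
  destruct (Req_dec (tt x n) 0) as [E|E].
  - exfalso. apply HE. left. exists n. intros k Hk. unfold digit. fold (tt x k). rewrite (tt_later n k Hk), E.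
    rewrite iter_fix; [unfold Defs.U; destruct Rlt_dec; [reflexivity|lra]|].
    unfold Defs.T. destruct Rlt_dec; lra.
  - destruct (Req_dec (tt x n) 1) as [E'|E'].
    + exfalso. apply HE. right. exists n. intros k Hk. unfold digit. fold (tt x k). rewrite (tt_later n k Hk), E'.
      rewrite iter_fix; [unfold Defs.U; repeat destruct Rlt_dec; try lra; reflexivity|].
      unfold Defs.T. repeat destruct Rlt_dec; lra.
    + lra.
Qed.

Lemma Jn_in n : In (Jn n) (pieces lam n).
Proof. apply (Jx_inv lam Hlam x Hx n). Qed.

Lemma x_int n : ha (Jn n) < x < hb (Jn n).
Proof.
  destruct (Jx_inv lam Hlam x Hx n) as [H1 [_ [H3 _]]]. pose proof (tt_interior n).
  pose proof (len_pos lam _ _ H1) as Hl. unfold Jn. unfold pos_ok in *.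
  assert (0 < tt x n * lenp (fst (Jx lam x n))) by (apply Rmult_lt_0_compat; lra).
  assert (0 < (1 - tt x n) * lenp (fst (Jx lam x n))) by (apply Rmult_lt_0_compat; lra).
  unfold lenp in *. destruct (snd (Jx lam x n)); cbv beta iota in H3; split; lra.
Qed.

Lemma x_inp n : inp (Jn n) x.
Proof. pose proof (x_int n). unfold inp; lra. Qed.

Lemma slope_id n : slope_n lam n x = slp (Jn n).
Proof. unfold slope_n. apply slope_chain; [apply chain_pieces|apply Jn_in|apply x_int]. Qed.

Lemma ln_len n : ln (lenp (Jn n)) = - Dn x n.
Proof.
  induction n.
  - unfold Jn, Dn, beta; simpl. tsimp. replace (1 - 0) with 1 by ring. rewrite ln_1. simpl. ring.
  - destruct (Jx_step lam Hlam x Hx n) as [_ [_ E]]. fold (Jn n) (Jn (S n)) in E. rewrite E.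
    pose proof (len_pos lam _ _ (Jn_in n)).
    destruct (DN_S lam x n) as [E2 _]. rewrite E2.
    assert (0 < lenfac (digit x n)) by (unfold lenfac; destruct (digit x n) as [|[|[|]]]; lra).
    rewrite ln_mult by auto. rewrite IHn.
    assert (ln (lenfac (digit x n)) = - dl (digit x n)).
    { unfold lenfac, dl. destruct (digit x n) as [|[|[|]]]; unfold Rdiv; rewrite Rmult_1_l, ln_Rinv; lra. }
    lra.
Qed.

Lemma len_small eps : 0 < eps -> exists N, forall n, (N <= n)%nat -> lenp (Jn n) < eps.
Proof.
  intros He. pose proof (ln3_pos).
  destruct (INR_archimed (ln 3) (- ln eps)) as [N HN]; [lra|].
  exists N. intros n Hn. pose proof (len_pos lam _ _ (Jn_in n)) as Hl.
  apply ln_lt_inv; auto. rewrite ln_len. pose proof (Dn_ge lam x n).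
  assert (INR N <= INR n) by (apply le_INR; auto). nra.
Qed.
End X.

Lemma exp_le_mono a b : a <= b -> exp a <= exp b.
Proof. intros [H|H]; [left; apply exp_increasing; auto|subst; lra]. Qed.

Fixpoint sumabs (P : list R) : R := match P with nil => 0 | c :: Q => Rabs c + sumabs Q end.

Lemma peval_bound P t : Rabs t <= 1 -> Rabs (peval P t) <= sumabs P.
Proof.
  induction P as [|c Q IH]; intros Ht; simpl. - rewrite Rabs_R0; lra.
  - eapply Rle_trans; [apply Rabs_triang|]. rewrite Rabs_mult. specialize (IH Ht).
    pose proof (Rabs_pos t). pose proof (Rabs_pos (peval Q t)). nra.
Qed.

Lemma sumabs_pos P : 0 <= sumabs P.
Proof. induction P; simpl; [lra|]. pose proof (Rabs_pos a); lra. Qed.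

Lemma rpow_nonneg t a : 0 <= rpow t a.
Proof. unfold rpow. destruct Rlt_dec; [unfold Rpower; left; apply exp_pos|lra]. Qed.

Lemma rpow_mono_exp t a b : 0 <= t < 1 -> b <= a -> rpow t a <= rpow t b.
Proof.
  intros Ht Hab. unfold rpow. destruct Rlt_dec; [|lra]. unfold Rpower. apply exp_le_mono.
  assert (ln t < 0) by (rewrite <- ln_1; apply ln_increasing; lra). nra.
Qed.

Lemma sq_le_rpow t b : 0 <= t < 1 -> b <= 2 -> t ^ 2 <= rpow t b.
Proof.
  intros Ht Hb. unfold rpow. destruct Rlt_dec as [H|H].
  - replace (t ^ 2) with (Rpower t (INR 2)) by (apply Rpower_pow; auto).
    simpl INR. unfold Rpower. apply exp_le_mono.
    assert (ln t < 0) by (rewrite <- ln_1; apply ln_increasing; lra). nra.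
  - assert (t = 0) by lra. subst. simpl. lra.
Qed.

Lemma poly_red f x0 a : 0 <= a -> pointwise_holder f x0 a ->
  exists c0 c1 C d, 0 < C /\ 0 < d /\ forall y, Rabs (y - x0) < d ->
    Rabs (f y - (c0 + c1 * (y - x0))) <= C * rpow (Rabs (y - x0)) (Rmin a (3/2)).
Proof.
  intros Ha [P [C [d [_ [HC [Hd H]]]]]].
  set (c0 := match P with nil => 0 | c :: _ => c end).
  set (c1 := match P with c :: d :: _ => d | _ => 0 end).
  set (Q := match P with c :: d :: Q => Q | _ => nil end).
  assert (HP : forall t, peval P t = c0 + c1 * t + t ^ 2 * peval Q t).
  { intros t. unfold c0, c1, Q. destruct P as [|c [|e Q']]; simpl; ring. }
  exists c0, c1, (C + sumabs Q), (Rmin d 1). pose proof (sumabs_pos Q).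
  split; [lra|split; [apply Rmin_pos; lra|]].
  intros y Hy. pose proof (Rmin_l d 1). pose proof (Rmin_r d 1).
  specialize (H y ltac:(lra)). set (t := y - x0) in *. rewrite HP in H.
  assert (Ht : 0 <= Rabs t < 1) by (split; [apply Rabs_pos|lra]).
  assert (G1 : rpow (Rabs t) a <= rpow (Rabs t) (Rmin a (3/2))) by (apply rpow_mono_exp; auto; apply Rmin_l).
  assert (G2 : Rabs t ^ 2 <= rpow (Rabs t) (Rmin a (3/2))) by (apply sq_le_rpow; auto; pose proof (Rmin_r a (3/2)); lra).
  assert (G3 : Rabs (peval Q t) <= sumabs Q) by (apply peval_bound; lra).
  replace (f y - (c0 + c1 * t)) with ((f y - (c0 + c1 * t + t ^ 2 * peval Q t)) + t ^ 2 * peval Q t) by ring.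
  eapply Rle_trans; [apply Rabs_triang|]. rewrite Rabs_mult, <- RPow_abs.
  pose proof (rpow_nonneg (Rabs t) (Rmin a (3/2))). pose proof (Rabs_pos (peval Q t)).
  pose proof (pow2_ge_0 (Rabs t)).
  assert (Rabs t ^ 2 * Rabs (peval Q t) <= rpow (Rabs t) (Rmin a (3 / 2)) * sumabs Q) by (apply Rmult_le_compat; auto).
  assert (C * rpow (Rabs t) a <= C * rpow (Rabs t) (Rmin a (3/2))) by (apply Rmult_le_compat_l; lra).
  nra.
Qed.

Lemma gg_fct lam u : 1/6 < lam < 5/6 -> (u < 4)%nat -> gg lam u = ln (fct lam u) /\ 0 < fct lam u.
Proof. intros Hl Hu. destruct u as [|[|[|[|]]]]; try lia; simpl; rewrite ?ln_1; (split; [try reflexivity; f_equal; ring|lra]). Qed.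

Lemma rpow_le_Rpower t l b : 0 <= b -> 0 <= t <= l -> 0 < l -> rpow t b <= Rpower l b.
Proof.
  intros Hb Ht Hl. unfold rpow. destruct Rlt_dec as [H|H].
  - unfold Rpower. apply exp_le_mono. apply Rmult_le_compat_l; auto. apply ln_le; lra.
  - unfold Rpower. left; apply exp_pos.
Qed.

Section X.
Variable lam x : R.
Hypothesis Hlam : 1/6 < lam < 5/6.
Hypothesis Hx : 0 <= x <= 1.
Hypothesis HE : ~ inE x.

Lemma second_diff n : let J := Jn lam x n in let l := lenp J in
  F lam (ha J + l/2) - (F lam (ha J + l/3) + F lam (ha J + 2 * l / 3)) / 2 = lam * l * Wp J /\
  inp J (ha J + l/3) /\ inp J (ha J + l/2) /\ inp J (ha J + 2 * l / 3).
Proof.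
  intros J l. pose proof (Jn_in lam x Hlam Hx n) as HJ. fold J in HJ. pose proof (len_pos lam _ _ HJ) as Hl.
  destruct (ch1_geo lam J Hl) as (B1&B2&B3&B4). destruct (ch2_geo lam J Hl) as (C1&C2&C3&C4).
  destruct (ch3_geo lam J Hl) as (D1&D2&D3&D4&D5).
  pose proof (F_ha lam Hlam (S n) (ch lam 1 J) (ch_in lam n J 1 HJ ltac:(lia))) as F1.
  pose proof (F_ha lam Hlam (S n) (ch lam 2 J) (ch_in lam n J 2 HJ ltac:(lia))) as F2.
  pose proof (F_ha lam Hlam (S n) (ch lam 3 J) (ch_in lam n J 3 HJ ltac:(lia))) as F3.
  rewrite B1, B4 in F1. rewrite C1, C4 in F2. rewrite D1, D5 in F3. fold l in F1, F2, F3.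
  rewrite F1, F2, F3. unfold inp, l, lenp in *. split; [unfold Ap; field|]. lra.
Qed.

Lemma Nn_lower : exists C0 n0, forall n, (n0 <= n)%nat -> Nn lam x n <= ln (Wp (Jn lam x n)) + C0.
Proof.
  assert (HW : forall n, 0 <= ln (Wp (Jn lam x n))) by (intros n; rewrite <- ln_1; apply ln_le; [lra|apply W_ge1]).
  destruct (Classical_Prop.classic (exists k, digit x k = 1%nat \/ digit x k = 2%nat)) as [[k Hk]|Hn].
  - set (m := fun n => Rabs (slp (Jn lam x n))).
    assert (Hstep : forall n, m (S n) = newmu lam (digit x n) (m n) (Wp (Jn lam x n))).
    { intros n. destruct (Jx_step lam Hlam x Hx n) as [_ [E _]]. exact E. }
    assert (Hb : forall n, 0 <= m n <= Wp (Jn lam x n)) by (intros n; split; [apply Rabs_pos|apply W_ge_abs]).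
    assert (Hk1 : 0 < m (S k)).
    { rewrite Hstep. destruct (newmu_lower lam Hlam (digit x k) (m k) (Wp (Jn lam x k)) (digit_range x k) (Hb k) (W_ge1 _)) as [_ G].
      specialize (G Hk). lra. }
    assert (Hind : forall j, 0 < m (j + S k)%nat /\ ln (m (S k)) - Nn lam x (S k) <= ln (m (j + S k)%nat) - Nn lam x (j + S k)).
    { induction j as [|j [IH1 IH2]]; [simpl; split; [auto|lra]|].
      change (S j + S k)%nat with (S (j + S k)). rewrite Hstep.
      destruct (newmu_lower lam Hlam (digit x (j + S k)) (m (j + S k)%nat) (Wp (Jn lam x (j + S k))) (digit_range x _) (Hb _) (W_ge1 _)) as [G _].
      destruct (gg_fct lam (digit x (j + S k)) Hlam (digit_range x _)) as [G1 G2].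
      destruct (DN_S lam x (j + S k)) as [_ E]. rewrite E.
      assert (0 < fct lam (digit x (j + S k)) * m (j + S k)%nat) by (apply Rmult_lt_0_compat; auto).
      split; [lra|]. assert (ln (fct lam (digit x (j + S k)) * m (j + S k)%nat) <= ln (newmu lam (digit x (j + S k)) (m (j + S k)%nat) (Wp (Jn lam x (j + S k))))) by (apply ln_le; auto).
      rewrite ln_mult in H0 by auto. lra. }
    exists (Nn lam x (S k) - ln (m (S k))), (S k). intros n Hn.
    destruct (Hind (n - S k)%nat) as [G1 G2]. replace (n - S k + S k)%nat with n in * by lia.
    assert (ln (m n) <= ln (Wp (Jn lam x n))) by (apply ln_le; auto; apply Hb). lra.
  - exists 0, 0%nat. intros n _. assert (Nn lam x n = 0).
    { induction n; [unfold Nn, beta; simpl; ring|]. destruct (DN_S lam x n) as [_ E]. rewrite E, IHn.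
      assert (digit x n <> 1%nat /\ digit x n <> 2%nat) by (split; intro; apply Hn; exists n; auto).
      pose proof (digit_range x n). destruct (digit x n) as [|[|[|[|]]]]; simpl; try lia; lra. }
    specialize (HW n). lra.
Qed.

Lemma part1 a : 0 <= a -> pointwise_holder (F lam) x a -> a <= 1 /\ Rbar_le (LimSup_seq (ratio lam x)) (1 - a).
Proof.
  intros Ha Hh. destruct (poly_red _ _ _ Ha Hh) as [q0 [q1 [C [d [HC [Hd Hpol]]]]]].
  set (b := Rmin a (3/2)) in *. assert (Hb0 : 0 <= b) by (apply Rmin_glb; lra).
  destruct (len_small lam x Hlam Hx d Hd) as [N1 HN1].
  set (c := ln (2 * C) - ln lam).
  assert (HA : forall n, (N1 <= n)%nat -> ln (Wp (Jn lam x n)) <= c + (1 - b) * Dn x n).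
  { intros n Hn. destruct (second_diff n) as [E [I1 [I2 I3]]].
    pose proof (x_inp lam x Hlam Hx HE n) as Ix.
    pose proof (Jn_in lam x Hlam Hx n) as HJ. pose proof (len_pos lam _ _ HJ) as Hl.
    pose proof (HN1 n Hn) as Hld. pose proof (W_ge1 (Jn lam x n)) as HW.
    set (J := Jn lam x n) in *. set (l := lenp J) in *.
    assert (Hpt : forall p, inp J p -> Rabs (F lam p - (q0 + q1 * (p - x))) <= C * Rpower l b).
    { intros p Hp. assert (Hpx : Rabs (p - x) <= l) by (unfold inp, l, lenp in *; apply Rabs_le; lra).
      eapply Rle_trans; [apply Hpol; lra|]. apply Rmult_le_compat_l; [lra|].
      apply rpow_le_Rpower; auto. split; [apply Rabs_pos|auto]. }
    pose proof (Hpt _ I1) as B1. pose proof (Hpt _ I2) as B2. pose proof (Hpt _ I3) as B3.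
    assert (Hlw : lam * l * Wp J <= 2 * C * Rpower l b).
    { rewrite <- E.
      replace (F lam (ha J + l / 2) - (F lam (ha J + l / 3) + F lam (ha J + 2 * l / 3)) / 2) with
        ((F lam (ha J + l / 2) - (q0 + q1 * (ha J + l / 2 - x))) - ((F lam (ha J + l / 3) - (q0 + q1 * (ha J + l / 3 - x)))
          + (F lam (ha J + 2 * l / 3) - (q0 + q1 * (ha J + 2 * l / 3 - x)))) / 2) by field.
      set (e1 := F lam (ha J + l / 2) - (q0 + q1 * (ha J + l / 2 - x))) in *.
      set (e2 := F lam (ha J + l / 3) - (q0 + q1 * (ha J + l / 3 - x))) in *.
      set (e3 := F lam (ha J + 2 * l / 3) - (q0 + q1 * (ha J + 2 * l / 3 - x))) in *.
      apply Rabs_le_between in B1. apply Rabs_le_between in B2. apply Rabs_le_between in B3. lra. }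
    assert (Hpos : 0 < lam * l * Wp J) by (repeat apply Rmult_lt_0_compat; lra).
    apply ln_le in Hlw; auto. rewrite !ln_mult in Hlw; try lra; try (apply Rmult_lt_0_compat; lra); try (unfold Rpower; apply exp_pos).
    unfold Rpower in Hlw. rewrite ln_exp in Hlw. unfold l, J in Hlw. rewrite (ln_len lam x Hlam Hx n) in Hlw.
    unfold c. fold J in Hlw. rewrite ln_mult by lra. lra. }
  assert (Hb1 : b <= 1).
  { destruct (Rle_dec b 1) as [|Hn]; auto. exfalso. pose proof ln3_pos.
    destruct (INR_archimed ((b - 1) * ln 3) c) as [N2 HN2]; [nra|].
    set (n := Nat.max N1 N2). specialize (HA n (Nat.le_max_l _ _)).
    assert (0 <= ln (Wp (Jn lam x n))) by (rewrite <- ln_1; apply ln_le; [lra|apply W_ge1]).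
    pose proof (Dn_ge lam x n). assert (INR N2 <= INR n) by (apply le_INR, Nat.le_max_r). assert (0 <= (b - 1) * (Dn x n - INR n * ln 3)) by (apply Rmult_le_pos; lra). assert (0 <= (b - 1) * ln 3 * (INR n - INR N2)) by (apply Rmult_le_pos; [apply Rmult_le_pos|]; lra). nra. }
  assert (Ha1 : a <= 1) by (unfold b, Rmin in Hb1; destruct Rle_dec; lra).
  assert (Hba : b = a) by (unfold b; rewrite Rmin_left; lra).
  split; auto. rewrite Hba in HA.
  destruct Nn_lower as [C0 [n0 HN0]].
  apply LS_le. intros eps He. pose proof ln3_pos.
  destruct (INR_archimed (eps * ln 3) (Rabs (c + C0))) as [N3 HN3]; [nra|].
  exists (Nat.max (Nat.max N1 n0) (S N3)). intros n Hn.
  assert (G1 : (N1 <= n)%nat) by lia. assert (G2 : (n0 <= n)%nat) by lia. assert (G3 : (S N3 <= n)%nat) by lia.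
  specialize (HA n G1). specialize (HN0 n G2). pose proof (Dn_ge lam x n).
  assert (INR (S N3) <= INR n) by (apply le_INR; auto). rewrite S_INR in H1.
  pose proof (pos_INR N3). pose proof (Rle_abs (c + C0)).
  assert (HD : 0 < Dn x n) by nra.
  rewrite ratio_eq. apply (Rmult_le_reg_r (Dn x n)); auto. unfold Rdiv. rewrite Rmult_assoc, Rinv_l, Rmult_1_r by lra.
  assert (0 <= eps * (Dn x n - INR n * ln 3)) by (apply Rmult_le_pos; lra). assert (0 <= eps * ln 3 * (INR n - INR N3)) by (apply Rmult_le_pos; [apply Rmult_le_pos|]; lra). nra.
Qed.
End X.

Section X.
Variable lam x : R.
Hypothesis Hlam : 1/6 < lam < 5/6.
Hypothesis Hx : 0 <= x <= 1.
Hypothesis HE : ~ inE x.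
Hypothesis HI : is_lim_seq (fun n => Rabs (slope_n lam n x)) p_infty.

Lemma Wbound r0 a : 0 <= r0 -> Rbar_le (LimSup_seq (ratio lam x)) r0 -> 0 <= a < 1 - r0 ->
  exists C2 n2, forall n, (n2 <= n)%nat -> ln (Wp (Jn lam x n)) <= C2 + (1 - a) * Dn x n.
Proof.
  intros Hr0 HL Ha. pose proof ln3_pos as H3.
  set (g := 1 - r0 - a). set (eps := g / (1 + / ln 3)).
  assert (Hinv : 0 < / ln 3) by (apply Rinv_0_lt_compat; lra).
  assert (Heps : 0 < eps) by (apply Rdiv_lt_0_compat; unfold g; lra).
  assert (Hg : eps + eps / ln 3 = g) by (unfold eps; field; lra).
  destruct (LS_ev _ _ HL eps Heps) as [Na HNa].
  set (M := Rmax 1 ((1 + 3 * lam / (6 * lam - 1)) / eps)).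
  set (m := fun n => Rabs (slp (Jn lam x n))).
  assert (Hm : eventually (fun n => M < m n)).
  { apply is_lim_seq_spec in HI. destruct (HI M) as [N HN]. exists N. intros n Hn. specialize (HN n Hn).
    unfold m. rewrite <- (slope_id lam x Hlam Hx HE n). exact HN. }
  destruct Hm as [Nb HNb].
  assert (HM1 : 1 <= M) by apply Rmax_l. assert (HM2 : (1 + 3 * lam / (6 * lam - 1)) / eps <= M) by apply Rmax_r.
  assert (Hstep : forall n, m (S n) = newmu lam (digit x n) (m n) (Wp (Jn lam x n))).
  { intros n. destruct (Jx_step lam Hlam x Hx n) as [_ [E _]]. exact E. }
  assert (HWsq : forall n, Wp (Jn lam x n) ^ 2 = 1 + m n ^ 2).
  { intros n. rewrite W_sq. unfold m. rewrite pow2_abs. reflexivity. }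
  assert (Hind : forall j, ln (m (j + Nb)%nat) <= ln (m Nb) + (Nn lam x (j + Nb) - Nn lam x Nb) + eps * INR j).
  { induction j. - simpl. lra.
    - change (S j + Nb)%nat with (S (j + Nb)). rewrite Hstep.
      pose proof (HNb (j + Nb)%nat ltac:(lia)) as Hmj.
      pose proof (newmu_upper lam Hlam (digit x (j + Nb)) (m (j + Nb)%nat) (Wp (Jn lam x (j + Nb))) eps
        (digit_range x _) Heps ltac:(lra) ltac:(lra) (HWsq _) ltac:(pose proof (W_ge1 (Jn lam x (j + Nb))); lra)) as G.
      destruct (DN_S lam x (j + Nb)) as [_ E]. rewrite E. rewrite S_INR. lra. }
  exists (ln 2 + ln (m Nb) - Nn lam x Nb), (Nat.max (Nat.max Na Nb) 1). intros n Hn.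
  assert (G1 : (Na <= n)%nat) by lia. assert (G2 : (Nb <= n)%nat) by lia. assert (G3 : (1 <= n)%nat) by lia.
  pose proof (HNb n G2) as Hmn. pose proof (HNa n G1) as Hr.
  pose proof (Dn_ge lam x n) as HD. assert (HnI : 1 <= INR n) by (apply (le_INR 1); auto).
  assert (HDp : 0 < Dn x n) by nra.
  assert (HN : Nn lam x n <= (r0 + eps) * Dn x n).
  { rewrite ratio_eq in Hr. apply (Rmult_le_compat_r (Dn x n)) in Hr; [|lra].
    unfold Rdiv in Hr. rewrite Rmult_assoc, Rinv_l, Rmult_1_r in Hr by lra. exact Hr. }
  assert (HW2 : Wp (Jn lam x n) <= 2 * m n).
  { pose proof (W_ge1 (Jn lam x n)). pose proof (HWsq n). nra. }
  assert (HlW : ln (Wp (Jn lam x n)) <= ln 2 + ln (m n)).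
  { rewrite <- ln_mult by lra. apply ln_le; auto. pose proof (W_ge1 (Jn lam x n)); lra. }
  pose proof (Hind (n - Nb)%nat) as G. replace (n - Nb + Nb)%nat with n in G by lia.
  rewrite minus_INR in G by auto. pose proof (pos_INR Nb).
  assert (eps * INR n <= eps / ln 3 * Dn x n).
  { unfold Rdiv. replace (eps * / ln 3 * Dn x n) with (eps * (Dn x n * / ln 3)) by ring.
    apply Rmult_le_compat_l; [lra|]. apply (Rmult_le_reg_r (ln 3)); auto.
    rewrite Rmult_assoc, Rinv_l, Rmult_1_r by lra. lra. }
  assert (r0 + eps + eps / ln 3 = 1 - a) by (unfold g in Hg; lra).
  nra.
Qed.

Lemma keyW C2 n2 a : 0 <= a <= 1 -> (forall n, (n2 <= n)%nat -> ln (Wp (Jn lam x n)) <= C2 + (1 - a) * Dn x n) ->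
  forall n s, (n2 <= n)%nat -> 0 <= s <= lenp (Jn lam x n) -> Wp (Jn lam x n) * s <= exp C2 * rpow s a.
Proof.
  intros Ha HC n s Hn Hs. pose proof (W_ge1 (Jn lam x n)) as HW. pose proof (exp_pos C2).
  unfold rpow. destruct Rlt_dec as [Hp|Hp].
  - specialize (HC n Hn). pose proof (ln_len lam x Hlam Hx n) as HLn.
    assert (ln s <= ln (lenp (Jn lam x n))) by (apply ln_le; lra).
    unfold Rpower. rewrite <- exp_plus. rewrite <- (exp_ln (Wp (Jn lam x n) * s)) by (apply Rmult_lt_0_compat; lra).
    apply exp_le_mono. rewrite ln_mult by lra. nra.
  - assert (s = 0) by lra. subst. rewrite Rmult_0_r. lra.
Qed.

Lemma rpow6 s d a : 0 <= a <= 1 -> 0 <= s <= 6 * d -> 0 < d -> rpow s a <= 6 * rpow d a.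
Proof.
  intros Ha Hs Hd. apply Rle_trans with (Rpower (6 * d) a); [apply rpow_le_Rpower; lra|].
  unfold rpow. destruct Rlt_dec; [|lra].
  rewrite <- Rpower_mult_distr by lra. apply Rmult_le_compat_r; [unfold Rpower; left; apply exp_pos|].
  rewrite <- (Rpower_1 6) at 2 by lra. apply Rle_Rpower; lra.
Qed.

Lemma holder_I r0 a : 0 <= r0 -> Rbar_le (LimSup_seq (ratio lam x)) r0 -> 0 <= a < 1 - r0 ->
  pointwise_holder (F lam) x a.
Proof.
  intros Hr0 HL Ha. destruct (Wbound r0 a Hr0 HL Ha) as [C2 [n2 HC]].
  assert (Ha1 : 0 <= a <= 1) by lra.
  pose proof (keyW C2 n2 a Ha1 HC) as KW.
  pose proof (x_int lam x Hlam Hx HE n2) as Hx2.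
  set (Ct := 6 * exp C2 * (K1 lam + K2 lam)).
  pose proof (K1_pos lam Hlam) as HK1. assert (HK2 : 0 < K2 lam) by (unfold K2; apply Rmult_lt_0_compat; lra).
  pose proof (exp_pos C2).
  exists (F lam x :: nil), Ct, (Rmin (x - ha (Jn lam x n2)) (hb (Jn lam x n2) - x)).
  split; [simpl; lia|]. split; [unfold Ct; repeat apply Rmult_lt_0_compat; lra|].
  split; [apply Rmin_pos; lra|].
  intros y Hy. simpl peval. pose proof (Rmin_l (x - ha (Jn lam x n2)) (hb (Jn lam x n2) - x)).
  pose proof (Rmin_r (x - ha (Jn lam x n2)) (hb (Jn lam x n2) - x)).
  replace (F lam y - (F lam x + (y - x) * 0)) with (F lam y - F lam x) by ring.
  destruct (Req_dec y x) as [->|Hyx].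
  { unfold Rminus. rewrite Rplus_opp_r, Rabs_R0. apply Rmult_le_pos; [unfold Ct; repeat apply Rmult_le_pos; lra|apply rpow_nonneg]. }
  set (d := Rabs (y - x)) in *. assert (Hd : 0 < d) by (apply Rabs_pos_lt; lra).
  assert (Hy2 : inp (Jn lam x n2) y) by (unfold inp; apply Rabs_lt_between in Hy; lra).
  destruct (len_small lam x Hlam Hx d Hd) as [N HN].
  destruct (exit_lemma (fun n => inp (Jn lam x n) y) n2 N Hy2) as [n [Hn [Hin Hout]]].
  { intros Hc. specialize (HN (n2 + N)%nat ltac:(lia)). pose proof (x_inp lam x Hlam Hx HE (n2 + N)).
    unfold inp in *. assert (Rabs (y - x) <= lenp (Jn lam x (n2 + N))) by (unfold lenp; apply Rabs_le; lra). fold d in H3. lra. }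
  destruct (Jx_step lam Hlam x Hx n) as [[i [Hi Ech]] _]. fold (Jn lam x n) (Jn lam x (S n)) in Ech.
  pose proof (Jn_in lam x Hlam Hx n) as HJ. pose proof (Jn_in lam x Hlam Hx (S n)) as HJ'.
  pose proof (len_pos lam _ _ HJ) as Hl.
  destruct (bp_child lam Hlam (Jn lam x n) i Hl Hi) as [Bpa Bpb]. rewrite <- Ech in Bpa, Bpb.
  pose proof (x_inp lam x Hlam Hx HE (S n)) as HxS. pose proof (x_int lam x Hlam Hx HE (S n)) as HxS'.
  assert (Hfin : forall e s1 s2, Rabs (F lam x - F lam e) <= K1 lam * Wp (Jn lam x (S n)) * s1 ->
      Rabs (F lam y - F lam e) <= K2 lam * Wp (Jn lam x n) * s2 ->
      0 <= s1 <= lenp (Jn lam x (S n)) -> 0 <= s2 <= lenp (Jn lam x n) -> s1 <= 6 * d -> s2 <= 6 * d ->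
      Rabs (F lam y - F lam x) <= Ct * rpow d a).
  { intros e s1 s2 E1 E2 S1 S2 S3 S4.
    pose proof (KW (S n) s1 ltac:(lia) S1) as W1. pose proof (KW n s2 Hn S2) as W2.
    pose proof (rpow6 s1 d a Ha1 ltac:(lra) Hd). pose proof (rpow6 s2 d a Ha1 ltac:(lra) Hd).
    replace (F lam y - F lam x) with ((F lam y - F lam e) - (F lam x - F lam e)) by ring.
    eapply Rle_trans; [apply Rabs_triang|]. rewrite Rabs_Ropp.
    assert (K1 lam * Wp (Jn lam x (S n)) * s1 <= K1 lam * (exp C2 * (6 * rpow d a))).
    { rewrite Rmult_assoc. apply Rmult_le_compat_l; [lra|]. eapply Rle_trans; [exact W1|]. apply Rmult_le_compat_l; lra. }
    assert (K2 lam * Wp (Jn lam x n) * s2 <= K2 lam * (exp C2 * (6 * rpow d a))).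
    { rewrite Rmult_assoc. apply Rmult_le_compat_l; [lra|]. eapply Rle_trans; [exact W2|]. apply Rmult_le_compat_l; lra. }
    unfold Ct. lra. }
  destruct (Rlt_dec y x) as [Hlt|Hge].
  - assert (Hy' : y < ha (Jn lam x (S n))) by (unfold inp in Hout; destruct (Rlt_dec y (ha (Jn lam x (S n)))); auto; exfalso; apply Hout; lra).
    destruct (edge_left lam Hlam (S n) _ x HJ' HxS) as [s1 [S1 [S1b E1]]].
    destruct (bp_lemma lam Hlam n _ _ y HJ Bpa Hin) as [s2 [S2 [S2b E2]]].
    apply (Hfin _ s1 s2 E1 E2 S1 S2).
    + unfold d. rewrite Rabs_right in S1b by lra. rewrite Rabs_left by lra. lra.
    + unfold d. rewrite Rabs_left in S2b by lra. rewrite Rabs_left by lra. lra.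
  - assert (Hy' : hb (Jn lam x (S n)) < y) by (unfold inp in Hout; destruct (Rlt_dec (hb (Jn lam x (S n))) y); auto; exfalso; apply Hout; lra).
    destruct (edge_right lam Hlam (S n) _ x HJ' HxS) as [s1 [S1 [S1b E1]]].
    destruct (bp_lemma lam Hlam n _ _ y HJ Bpb Hin) as [s2 [S2 [S2b E2]]].
    apply (Hfin _ s1 s2 E1 E2 S1 S2).
    + unfold d. rewrite Rabs_left in S1b by lra. rewrite Rabs_right by lra. lra.
    + unfold d. rewrite Rabs_right in S2b by lra. rewrite Rabs_right by lra. lra.
Qed.
End X.

Theorem proposition3p14 (lam : R) (Hlam : 1/6 < lam < 5/6) :
  forall x : R, 0 <= x <= 1 -> ~ inE x ->
    Rbar_le (holder_exponent (F lam) x) (holder_bound lam x) /\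
    (inI lam x -> holder_exponent (F lam) x = holder_bound lam x).
Proof.
  intros x Hx HE.
  assert (PA : Rbar_le (holder_exponent (F lam) x) (holder_bound lam x)).
  { unfold holder_exponent. destruct (Lub_Rbar_correct (fun alpha => 0 <= alpha /\ pointwise_holder (F lam) x alpha)) as [_ Hl].
    apply Hl. intros a [Ha0 Ha]. destruct (part1 lam x Hlam Hx HE a Ha0 Ha) as [Ha1 HLS].
    unfold holder_bound. destruct (LimSup_seq (ratio lam x)) as [r| |]; simpl in *.
    - unfold Rmax. destruct Rle_dec; lra.
    - contradiction.
    - lra. }
  split; auto.
  intros [_ [_ HI]].
  assert (HLc : Rbar_le (LimSup_seq (ratio lam x)) (c0 lam)).
  { apply LS_le. intros eps He. exists 0%nat. intros n _. pose proof (ratio_le_c0 lam Hlam x n). lra. }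
  pose proof (c0_bounds lam Hlam) as Hc0.
  set (r0 := match LimSup_seq (ratio lam x) with Finite r => Rmax r 0 | _ => 0 end).
  assert (Hr0 : 0 <= r0 < 1 /\ Rbar_le (LimSup_seq (ratio lam x)) r0 /\ holder_bound lam x = Finite (1 - r0)).
  { unfold r0, holder_bound. destruct (LimSup_seq (ratio lam x)) as [r| |]; simpl in *.
    - split; [unfold Rmax; destruct Rle_dec; lra|]. split; [apply Rmax_l|]. try reflexivity; try (f_equal; ring).
    - contradiction.
    - split; [lra|]. split; [auto|try reflexivity; try (f_equal; ring)]. }
  destruct Hr0 as [Hr0a [Hr0b Hb]]. rewrite Hb in *.
  apply Rbar_le_antisym; auto.
  unfold holder_exponent in *.
  destruct (Lub_Rbar_correct (fun alpha => 0 <= alpha /\ pointwise_holder (F lam) x alpha)) as [Hub _].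
  destruct (Lub_Rbar (fun alpha => 0 <= alpha /\ pointwise_holder (F lam) x alpha)) as [h| |]; simpl.
  - destruct (Rle_dec (1 - r0) h) as [|Hn]; auto. exfalso.
    set (a := (Rmax h 0 + (1 - r0)) / 2).
    assert (Ha : 0 <= a < 1 - r0 /\ h < a) by (unfold a, Rmax; destruct Rle_dec; lra).
    pose proof (holder_I lam x Hlam Hx HE HI r0 a (proj1 Hr0a) Hr0b (proj1 Ha)) as Hp.
    specialize (Hub a (conj (proj1 (proj1 Ha)) Hp)). simpl in Hub. lra.
  - exact I.
  - pose proof (holder_I lam x Hlam Hx HE HI r0 0 (proj1 Hr0a) Hr0b ltac:(lra)) as Hp.
    specialize (Hub 0 (conj (Rle_refl 0) Hp)). simpl in Hub. exact Hub.
Qed.
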